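(* Let $(\mathcal{A},\mathcal{E})$ be a finite, essentially small exact category. Then $\mu_\mathcal{E}:(\mathrm{ind}\mathcal{A},\subset_\mathcal{E})\to(\mathfrak{S}(\mathbb{N}),\lll)$ is a Gabriel–Roiter measure, i.e.: (GR1) $\mu_\mathcal{E}$ is order-preserving; (GR2) $\mu_\mathcal{E}(X)=\mu_\mathcal{E}(Y)$ implies $l_\mathcal{E}(X)=l_\mathcal{E}(Y)$ for all $X,Y\in\mathrm{ind}\mathcal{A}$; (GR3) if $X,Y\in\mathrm{ind}\mathcal{A}$ satisfy $l_\mathcal{E}(X)\ge l_\mathcal{E}(Y)$ and $\mu_\mathcal{E}(X')\lll\mu_\mathcal{E}(Y)$ with $\mu_\mathcal{E}(X')\ne\mu_\mathcal{E}(Y)$ for every indecomposable $X'\subsetneq_\mathcal{E}X$, then $\mu_\mathcal{E}(X)\lll\mu_\mathcal{E}(Y)$.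
   Context: $(\mathcal{A},\mathcal{E})$ is a Quillen exact category; admissible monics are morphisms $i$ with $(i,d)\in\mathcal{E}$ for some $d$. $X\subset_\mathcal{E}Y$ means there is an admissible monic $X\to Y$; $X\subsetneq_\mathcal{E}Y$ means there is one that is not an isomorphism. The $\mathcal{E}$-length $l_\mathcal{E}(X)$ is the supremum of all $n$ such that there is a chain $0=X_0\to\cdots\to X_n=X$ of admissible monics none of which is an isomorphism; $(\mathcal{A},\mathcal{E})$ is finite if $l_\mathcal{E}(X)<\infty$ for all $X$. $\mathrm{ind}\mathcal{A}$ is the set of isomorphism classes of indecomposable objects, partially ordered by $\subset_\mathcal{E}$. $\mathfrak{S}(\mathbb{N})$ is the set of finite nonempty sequences of natural numbers, totally ordered by: $x\lll y$ iff $x=y$, or $x$ is a proper prefix of $y$, or at the first index $i$ where $x_i\neq y_i$ (both defined) one has $x_i>y_i$. For indecomposable $X$, $\mu_\mathcal{E}(X)$ is the $\lll$-maximum of $(l_\mathcal{E}(X_1),\dots,l_\mathcal{E}(X_n))$ over all chains $X_1\subsetneq_\mathcal{E}\cdots\subsetneq_\mathcal{E}X_n=X$ ($n\ge1$) with all $X_i$ indecomposable. *)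

(* Defs.v *)
From HB Require Import structures.
From mathcomp Require Import all_boot all_order all_algebra.
From Stdlib Require Import ClassicalEpsilon.

Set Implicit Arguments.
Unset Strict Implicit.
Unset Printing Implicit Defensive.
Import GRing.Theory.
Local Open Scope ring_scope.

Record PreAddCat := {
  Obj :> Type;
  Hom : Obj -> Obj -> zmodType;
  comp : forall (X Y Z : Obj), Hom Y Z -> Hom X Y -> Hom X Z;
  idm : forall X : Obj, Hom X X;
  compA : forall (X Y Z W : Obj) (f : Hom Z W) (g : Hom Y Z) (h : Hom X Y),
      comp f (comp g h) = comp (comp f g) h;
  comp1m : forall (X Y : Obj) (f : Hom X Y), comp (idm Y) f = f;
  compm1 : forall (X Y : Obj) (f : Hom X Y), comp f (idm X) = f;
  compDl : forall (X Y Z : Obj) (f g : Hom Y Z) (h : Hom X Y),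
      comp (f + g) h = comp f h + comp g h;
  compDr : forall (X Y Z : Obj) (f : Hom Y Z) (g h : Hom X Y),
      comp f (g + h) = comp f g + comp f h
}.
Arguments Hom {_}.
Arguments comp {_ X Y Z}.
Arguments idm {_}.

Section Basic.
Variable C : PreAddCat.

Definition IsZero (Z : C) : Prop := idm Z = 0.

Definition IsIso (X Y : C) (f : Hom X Y) : Prop :=
  exists g : Hom Y X, comp g f = idm X /\ comp f g = idm Y.

Definition IsBiprod (X Y B : C) (i1 : Hom X B) (i2 : Hom Y B)
    (p1 : Hom B X) (p2 : Hom B Y) : Prop :=
  [/\ comp p1 i1 = idm X, comp p2 i2 = idm Y, comp p1 i2 = 0,
      comp p2 i1 = 0 & comp i1 p1 + comp i2 p2 = idm B].

Definition IsKernel (A B D : C) (i : Hom A B) (d : Hom B D) : Prop :=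
  comp d i = 0 /\
  forall (T : C) (g : Hom T B), comp d g = 0 ->
    exists h : Hom T A, comp i h = g /\ forall h' : Hom T A, comp i h' = g -> h' = h.

Definition IsCokernel (A B D : C) (i : Hom A B) (d : Hom B D) : Prop :=
  comp d i = 0 /\
  forall (T : C) (g : Hom B T), comp g i = 0 ->
    exists h : Hom D T, comp h d = g /\ forall h' : Hom D T, comp h' d = g -> h' = h.

Definition IsPushout (A B A' B' : C) (i : Hom A B) (f : Hom A A')
    (i' : Hom A' B') (f' : Hom B B') : Prop :=
  comp f' i = comp i' f /\
  forall (T : C) (u : Hom B T) (v : Hom A' T), comp u i = comp v f ->
    exists w : Hom B' T, (comp w f' = u /\ comp w i' = v) /\
      forall w' : Hom B' T, comp w' f' = u -> comp w' i' = v -> w' = w.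

Definition IsPullback (B D B' D' : C) (d : Hom B D) (g : Hom D' D)
    (d' : Hom B' D') (g' : Hom B' B) : Prop :=
  comp d g' = comp g d' /\
  forall (T : C) (u : Hom T B) (v : Hom T D'), comp d u = comp g v ->
    exists w : Hom T B', (comp g' w = u /\ comp d' w = v) /\
      forall w' : Hom T B', comp g' w' = u -> comp d' w' = v -> w' = w.

End Basic.

Record AddCat := {
  pacat :> PreAddCat;
  has_zero : exists Z : pacat, IsZero Z;
  has_biprod : forall X Y : pacat, exists (B : pacat) (i1 : Hom X B) (i2 : Hom Y B)
      (p1 : Hom B X) (p2 : Hom B Y), IsBiprod i1 i2 p1 p2
}.

Section ExactDefs.
Variable C : PreAddCat.
Variable E : forall A B D : C, Hom A B -> Hom B D -> Prop.

Definition AdmMono (A B : C) (i : Hom A B) : Prop :=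
  exists (D : C) (d : Hom B D), E i d.
Definition AdmEpi (B D : C) (d : Hom B D) : Prop :=
  exists (A : C) (i : Hom A B), E i d.

Definition exact_axioms : Prop :=
  (forall (A B D : C) (i : Hom A B) (d : Hom B D),
      E i d -> IsKernel i d /\ IsCokernel i d) /\
  (forall (A B D A' B' D' : C) (i : Hom A B) (d : Hom B D)
          (i' : Hom A' B') (d' : Hom B' D')
          (a : Hom A A') (b : Hom B B') (c : Hom D D'),
      IsIso a -> IsIso b -> IsIso c ->
      comp b i = comp i' a -> comp c d = comp d' b ->
      E i d -> E i' d') /\
  (forall A : C, AdmMono (idm A)) /\
  (forall A : C, AdmEpi (idm A)) /\
  (forall (A B D : C) (f : Hom A B) (g : Hom B D),
      AdmMono f -> AdmMono g -> AdmMono (comp g f)) /\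
  (forall (A B D : C) (f : Hom A B) (g : Hom B D),
      AdmEpi f -> AdmEpi g -> AdmEpi (comp g f)) /\
  (forall (A B A' : C) (i : Hom A B) (f : Hom A A'), AdmMono i ->
      exists (B' : C) (i' : Hom A' B') (f' : Hom B B'),
        IsPushout i f i' f' /\ AdmMono i') /\
  (forall (B D D' : C) (d : Hom B D) (g : Hom D' D), AdmEpi d ->
      exists (B' : C) (d' : Hom B' D') (g' : Hom B' B),
        IsPullback d g d' g' /\ AdmEpi d').

End ExactDefs.

Record ExactCat := {
  acat :> AddCat;
  Ex : forall A B D : acat, Hom A B -> Hom B D -> Prop;
  Ex_axioms : exact_axioms Ex
}.

Section Length.
Variable C : ExactCat.

Definition SubE (X Y : C) : Prop := exists i : Hom X Y, AdmMono (@Ex C) i.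
Definition SubNeqE (X Y : C) : Prop :=
  exists i : Hom X Y, AdmMono (@Ex C) i /\ ~ IsIso i.

Inductive EChain : C -> nat -> Prop :=
| EChain0 (Z : C) : IsZero Z -> EChain Z 0
| EChainS (X Y : C) (n : nat) : EChain X n -> SubNeqE X Y -> EChain Y n.+1.

(* l_E(X) = sup { n | EChain X n } (the maximum; well defined when the
   category is finite, which is assumed in the theorem) *)
Definition lengthE (X : C) : nat :=
  epsilon (inhabits 0%N)
    (fun n => EChain X n /\ forall m, EChain X m -> (m <= n)%N).

Definition finiteE : Prop :=
  forall X : C, exists n : nat, forall m, EChain X m -> (m <= n)%N.

Definition Indec (X : C) : Prop :=
  ~ IsZero X /\
  forall (Y Z : C) (i1 : Hom Y X) (i2 : Hom Z X) (p1 : Hom X Y) (p2 : Hom X Z),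
    IsBiprod i1 i2 p1 p2 -> IsZero Y \/ IsZero Z.

End Length.

Definition slex (x y : seq nat) : Prop :=
  x = y \/
  (exists z : seq nat, z <> [::] /\ y = x ++ z) \/
  (exists i : nat, (i < size x)%N /\ (i < size y)%N /\
     take i x = take i y /\ (nth 0%N y i < nth 0%N x i)%N).

Section Mu.
Variable C : ExactCat.

(* IndChain s X : there is a chain X_1 \subsetneq_E ... \subsetneq_E X_n = X
   of indecomposables with s = (l_E(X_1), ..., l_E(X_n)) *)
Inductive IndChain : seq nat -> C -> Prop :=
| IndChain1 (X : C) : Indec X -> IndChain [:: lengthE X] X
| IndChainS (s : seq nat) (X Y : C) :
    IndChain s X -> SubNeqE X Y -> Indec Y -> IndChain (rcons s (lengthE Y)) Y.

Definition muE (X : C) : seq nat :=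
  epsilon (inhabits [:: 0%N])
    (fun s => IndChain s X /\ forall t, IndChain t X -> slex t s).

End Mu.

(* Main.v *)
Require Import Defs.
From HB Require Import structures.
From mathcomp Require Import all_boot all_order all_algebra.
From Stdlib Require Import ClassicalEpsilon Classical.
From mathcomp Require Import zify.

Set Implicit Arguments.
Unset Strict Implicit.
Unset Printing Implicit Defensive.
Import GRing.Theory.

Fixpoint sle (x y : seq nat) : bool :=
  match x, y with
  | [::], _ => true
  | _ :: _, [::] => false
  | a :: x', b :: y' => (b < a) || ((a == b) && sle x' y')
  end.

Lemma sle_refl x : sle x x.
Proof. by elim: x => //= a x ->; rewrite eqxx orbT. Qed.

Lemma sle_cat x z : sle x (x ++ z).
Proof. by elim: x => //= a x ->; rewrite eqxx orbT. Qed.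

Lemma sle_trans x y z : sle x y -> sle y z -> sle x z.
Proof.
elim: x y z => // a x IH [|b y] [|c z] //=.
case/orP=> [lt1|/andP [/eqP eab l1]]; case/orP=> [lt2|/andP [/eqP ebc l2]].
- by rewrite (ltn_trans lt2 lt1).
- by rewrite -ebc lt1.
- by rewrite eab lt2.
- by rewrite eab ebc eqxx (IH _ _ l1 l2) orbT.
Qed.

Lemma sle_anti x y : sle x y -> sle y x -> x = y.
Proof.
elim: x y => [|a x IH] [|b y] //=.
case/orP=> [lt1|/andP [/eqP eab l1]]; case/orP=> [lt2|/andP [/eqP eba l2]].
- by move: (ltn_trans lt1 lt2); rewrite ltnn.
- by move: lt1; rewrite eba ltnn.
- by move: lt2; rewrite eab ltnn.
- by rewrite eab (IH _ l1 l2).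
Qed.

Lemma slexE x y : slex x y <-> sle x y.
Proof.
elim: x y => [|a x IH] [|b y].
- by split=> // _; left.
- by split=> // _; right; left; exists (b :: y).
- split=> //; case=> [//|[[z [_ //]]|[i [_ [//]]]]].
- split.
  + case=> [[-> ->]|[[z [nz [-> ->]]]|[[|i] [hi1 [hi2 [ht hn]]]]]] /=.
    * by rewrite eqxx sle_refl orbT.
    * by rewrite eqxx sle_cat orbT.
    * by rewrite hn.
    * case: ht => -> ht; rewrite eqxx /=; apply/orP; right.
      apply/IH; right; right; exists i; split=> //.
  + rewrite /=; case/orP=> [lt|/andP [/eqP eab /IH l]].
    * right; right; exists 0; split=> //.
    * rewrite eab; case: l=> [->|[[z [nz ->]]|[i [hi1 [hi2 [ht hn]]]]]].
      -- by left.
      -- by right; left; exists z.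
      -- right; right; exists i.+1; split=> //=; split=> //; split=> //.
         by rewrite ht.
Qed.

Lemma sle_rcons s t c :
  sle s t -> s <> t -> sorted leq t -> t <> [::] -> last 0 t <= c ->
  sle (rcons s c) t.
Proof.
have hlast : forall b r, path leq b r -> b <= last b r.
  move=> b r; elim: r b => //= x r IHr b /andP [hbx hp].
  exact: leq_trans hbx (IHr _ hp).
elim: s t => [|a s IH] [|b t] // hle hne hs _ hl /=.
- rewrite andbT orbC eq_sym -leq_eqVlt.
  exact: leq_trans (hlast _ _ hs) hl.
- move: hle => /=; case/orP=> [->//|/andP [/eqP eab hle]].
  rewrite eab eqxx /=; apply/orP; right.
  case: t hne hs hl hle => [|x r] hne hs hl hle.
    by case: s IH hle hne => // _ _ hne; exfalso; apply: hne; rewrite eab.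
  apply: IH => //.
  + by move=> est; apply: hne; rewrite eab est.
  + exact: path_sorted hs.
Qed.

Lemma min_nat (P : nat -> Prop) : (exists n, P n) ->
  exists n, P n /\ forall m, P m -> n <= m.
Proof.
case=> n Pn.
suff: forall k n, n <= k -> P n -> exists n, P n /\ forall m, P m -> n <= m.
  by move=> H; exact: (H n n (leqnn n) Pn).
elim=> [|k IHk] {n Pn} n hn Pn.
  exists n; split=> // m _; by move: hn; rewrite leqn0 => /eqP ->.
case: (classic (exists m, P m /\ m < n)) => [[m [Pm hm]]|nom].
  by apply: (IHk m) => //; rewrite -ltnS (leq_trans hm hn).
exists n; split=> // m Pm; rewrite leqNgt; apply/negP=> hm; apply: nom.
by exists m.
Qed.

Lemma max_nat (P : nat -> Prop) N : (exists n, P n) -> (forall m, P m -> m <= N) ->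
  exists n, P n /\ forall m, P m -> m <= n.
Proof.
case=> k Pk hb.
suff: forall j k, N - k <= j -> P k -> exists n, P n /\ forall m, P m -> m <= n.
  by move=> H; exact: (H _ k (leqnn _) Pk).
elim=> [|j IHj] {k Pk} k hk Pk.
  exists k; split=> // m Pm; move: hk; rewrite leqn0 subn_eq0 => hk.
  exact: leq_trans (hb _ Pm) hk.
case: (classic (exists m, P m /\ k < m)) => [[m [Pm hm]]|nom].
  apply: (IHj m) => //.
  have := hb _ Pm; have := hb _ Pk; lia.
exists k; split=> // m Pm; rewrite leqNgt; apply/negP=> hm; apply: nom.
by exists m.
Qed.

Lemma sle_max K (S : seq nat -> Prop) : (exists s, S s) ->
  (forall s, S s -> s <> [::] /\ size s <= K) ->
  exists m, S m /\ forall t, S t -> sle t m.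
Proof.
elim: K S => [|K IH] S [s Ss] hS.
  by case: (hS _ Ss); case: s Ss.
have [a [[t0 Sa] amin]] := min_nat (P := fun a => exists t, S (a :: t))
   (match s as s0 return S s0 -> _ with
    | [::] => fun H => False_ind _ ((hS _ H).1 erefl)
    | b :: t => fun H => ex_intro _ b (ex_intro _ t H) end Ss).
case: (classic (exists t, t <> [::] /\ S (a :: t))) => [hT|noT].
  have [m0 [[m0nz Sm0] hm0]] := IH (fun t => t <> [::] /\ S (a :: t)) hT
    (fun t ht => conj ht.1 (hS _ ht.2).2).
  exists (a :: m0); split=> // [[|b t]] St; first by case: (hS _ St).
  have hab : a <= b by apply: amin; exists t.
  rewrite /=; case: ltngtP hab => // eab _.
  case: t St => // x r St.
  by apply: hm0; split=> //; rewrite eab.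
exists [:: a]; split.
  case: t0 Sa => // x r Sa; exfalso; apply: noT; by exists (x :: r).
move=> [|b t] St; first by case: (hS _ St).
have hab : a <= b by apply: amin; exists t.
rewrite /=; case: ltngtP hab => // eab _.
case: t St => // x r St.
by exfalso; apply: noT; exists (x :: r); rewrite eab.
Qed.

Lemma zmod_dbl (V : zmodType) (x : V) : (x + x = x)%R -> x = 0%R.
Proof. by move=> H; apply: (addrI x); rewrite addr0. Qed.

Section Main.
Variable C : ExactCat.
Hypothesis hfin : finiteE C.

Lemma comp0r (X Y Z : C) (f : Defs.Hom Y Z) : Defs.comp f (0%R : Defs.Hom X Y) = 0%R.
Proof.
apply: (@zmod_dbl (Defs.Hom X Z)).
by rewrite -Defs.compDr (@addr0 (Defs.Hom X Y)).
Qed.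

Lemma comp0l (X Y Z : C) (f : Defs.Hom X Y) : Defs.comp (0%R : Defs.Hom Y Z) f = 0%R.
Proof.
apply: (@zmod_dbl (Defs.Hom X Z)).
by rewrite -Defs.compDl (@addr0 (Defs.Hom Y Z)).
Qed.

Lemma chain_exists (X : C) : exists n, EChain X n.
Proof.
case: (classic (IsZero X)) => hz; first by exists 0; constructor.
have [Hker [_ [_ [HE0op _]]]] := Ex_axioms C.
have [A [i Ei]] := HE0op X.
have [[hi0 hik] _] := Hker _ _ _ _ _ Ei.
rewrite Defs.comp1m in hi0.
have hA : IsZero A.
  have [h [_ hu]] := hik A 0%R (comp0r _ _).
  rewrite /IsZero (hu (idm A)); last by rewrite Defs.compm1 hi0.
  by rewrite (hu 0%R) // comp0r.
exists 1; apply: (EChainS (X := A)); first by constructor.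
exists i; split; first by exists X, (idm X).
case=> g [_ hg]; apply: hz; by rewrite /IsZero -hg hi0 comp0l.
Qed.

Lemma length_spec (X : C) :
  EChain X (lengthE X) /\ forall m, EChain X m -> m <= lengthE X.
Proof.
have [N hN] := hfin X.
exact: (epsilon_spec (inhabits 0%N)
  (fun n => EChain X n /\ forall m, EChain X m -> (m <= n)%N)
  (max_nat (chain_exists X) hN)).
Qed.

Lemma length_lt (X Y : C) : SubNeqE X Y -> lengthE X < lengthE Y.
Proof.
move=> h; apply: (length_spec Y).2; apply: EChainS h.
exact: (length_spec X).1.
Qed.

Lemma iso_adm (X Y : C) (f : Defs.Hom X Y) : IsIso f -> AdmMono (@Ex C) f.
Proof.
case=> h [hf1 hf2].
have [_ [Hiso [HE0 _]]] := Ex_axioms C.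
have [D [d Ed]] := HE0 X.
exists D, (Defs.comp d h).
apply: (Hiso _ _ _ _ _ _ _ _ _ _ (idm X) f (idm D) _ _ _ _ _ Ed).
- by exists (idm X); rewrite Defs.comp1m.
- by exists h.
- by exists (idm D); rewrite Defs.comp1m.
- by rewrite !Defs.compm1.
- by rewrite Defs.comp1m -Defs.compA hf1 Defs.compm1.
Qed.

Lemma subneq_comp (X0 X Y : C) (j : Defs.Hom X0 X) (i : Defs.Hom X Y) :
  AdmMono (@Ex C) j -> ~ IsIso j -> AdmMono (@Ex C) i -> IsIso i -> SubNeqE X0 Y.
Proof.
move=> aj nj ai [g [hg1 hg2]].
have [_ [_ [_ [_ [HE1 _]]]]] := Ex_axioms C.
exists (Defs.comp i j); split; first exact: HE1.
case=> k [hk1 hk2]; apply: nj; exists (Defs.comp k i); split.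
  by rewrite -Defs.compA.
rewrite -[Defs.comp j _]Defs.comp1m -hg1 -!Defs.compA (Defs.compA i j) (Defs.compA (Defs.comp i j)) hk2.
by rewrite Defs.comp1m.
Qed.

Lemma iso_chain (X Y : C) (f : Defs.Hom X Y) n :
  IsIso f -> EChain X n -> EChain Y n.
Proof.
move=> hf hX; move: f hf; case: hX => [Z hZ|X' Z m hc [j [aj nj]]] f hf.
  constructor; case: hf => g [_ hg].
  by rewrite /IsZero -hg -[f]Defs.compm1 hZ comp0r comp0l.
apply: EChainS hc _; exact: subneq_comp aj nj (iso_adm hf) hf.
Qed.

Lemma iso_length (X Y : C) (f : Defs.Hom X Y) : IsIso f -> lengthE X = lengthE Y.
Proof.
move=> hf; have hf' : exists g : Defs.Hom Y X, IsIso g.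
  by case: hf => g [h1 h2]; exists g, f.
case: hf' => g hg; apply/eqP; rewrite eqn_leq; apply/andP; split.
  apply: (length_spec Y).2; exact: iso_chain hf (length_spec X).1.
apply: (length_spec X).2; exact: iso_chain hg (length_spec Y).1.
Qed.

Lemma sorted_rcons_leq s y : sorted leq s -> last 0 s <= y -> sorted leq (rcons s y).
Proof.
case: s => //= x p hp hl; by rewrite rcons_path hp hl.
Qed.

Lemma indchain_inv s (X : C) : IndChain s X ->
  [/\ Indec X, s <> [::], sorted leq s, last 0 s = lengthE X & size s <= (lengthE X).+1].
Proof.
elim=> [Z hZ|s' X0 Y hc [hI hne hs hl hsz] hsub hY]; first by split.
have hlt := length_lt hsub.
split=> //.
- by case: s' {hc hne hs hl hsz}.
- by apply: sorted_rcons_leq => //; rewrite hl ltnW.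
- by rewrite last_rcons.
- by rewrite size_rcons ltnS (leq_trans hsz hlt).
Qed.

Lemma indchain_case s (X : C) : IndChain s X ->
  s = [:: lengthE X] \/
  exists s' (X0 : C), IndChain s' X0 /\ SubNeqE X0 X /\ s = rcons s' (lengthE X).
Proof.
case=> [Z hZ|s' X0 Y hc hsub hY]; first by left.
by right; exists s', X0.
Qed.

Lemma mu_spec (X : C) : Indec X ->
  IndChain (muE X) X /\ forall t, IndChain t X -> sle t (muE X).
Proof.
move=> hX.
have [m [hm1 hm2]] := sle_max (K := (lengthE X).+1) (S := fun s => IndChain s X)
  (ex_intro _ _ (IndChain1 hX))
  (fun s hs => let: And5 _ a _ _ b := indchain_inv hs in conj a b).
have : IndChain (muE X) X /\ forall t, IndChain t X -> slex t (muE X).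
  apply: (epsilon_spec (inhabits [:: 0%N])
    (fun s => IndChain s X /\ forall t, IndChain t X -> slex t s)).
  exists m; split=> // t ht.
  by apply/slexE; apply: hm2.
case=> h1 h2; split=> // t ht; apply/slexE; exact: h2.
Qed.

End Main.

Theorem theorem7p7 (C : ExactCat) (hfin : finiteE C) :
  (* (GR1) order-preserving *)
  (forall X Y : C, Indec X -> Indec Y -> SubE X Y -> slex (muE X) (muE Y)) /\
  (* (GR2) *)
  (forall X Y : C, Indec X -> Indec Y -> muE X = muE Y -> lengthE X = lengthE Y) /\
  (* (GR3) *)
  (forall X Y : C, Indec X -> Indec Y ->
     (lengthE Y <= lengthE X)%N ->
     (forall X' : C, Indec X' -> SubNeqE X' X ->
        slex (muE X') (muE Y) /\ muE X' <> muE Y) ->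
     slex (muE X) (muE Y)).
Proof.
split; [|split].
- move=> X Y hX hY [i ai]; apply/slexE.
  have [mX1 mX2] := mu_spec hfin hX.
  have [mY1 mY2] := mu_spec hfin hY.
  case: (classic (IsIso i)) => hi.
    apply: mY2.
    case: (indchain_case mX1) => [->|[s' [X0 [hc [[j [aj nj]] ->]]]]].
      rewrite (iso_length hfin hi); exact: IndChain1.
    rewrite (iso_length hfin hi); apply: IndChainS hc _ hY.
    exact: subneq_comp aj nj ai hi.
  apply: (sle_trans (y := rcons (muE X) (lengthE Y))).
    by rewrite -cats1 sle_cat.
  by apply: mY2; apply: IndChainS mX1 _ hY; exists i.
- move=> X Y hX hY e.
  have [mX1 _] := mu_spec hfin hX.
  have [mY1 _] := mu_spec hfin hY.
  have [_ _ _ lX _] := indchain_inv hfin mX1.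
  have [_ _ _ lY _] := indchain_inv hfin mY1.
  by rewrite -lX -lY e.
- move=> X Y hX hY hl hyp; apply/slexE.
  have [mX1 _] := mu_spec hfin hX.
  have [mY1 _] := mu_spec hfin hY.
  have [_ nY sY lY _] := indchain_inv hfin mY1.
  case: (indchain_case mX1) => [->|[s' [X0 [hc [hsub ->]]]]].
    by apply: (sle_rcons (s := [::])) => //; [case: (muE Y) nY | rewrite lY].
  have [hX0 _ _ _ _] := indchain_inv hfin hc.
  have [mX01 mX02] := mu_spec hfin hX0.
  have [/slexE h1 h2] := hyp X0 hX0 hsub.
  have hs' := mX02 _ hc.
  apply: sle_rcons => //.
  + exact: sle_trans hs' h1.
  + by move=> e; apply: h2; apply: sle_anti => //; rewrite -e.
  + by rewrite lY.
Qed.
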